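(* Let $z,r,z',r'$ be real numbers with $z^2+r^2\le1$ and $z'^2+r'^2\le 1$, and set $$\rho=\frac12\begin{pmatrix}1+z & r\\ r & 1-z\end{pmatrix},\qquad \rho'=\frac12\begin{pmatrix}1+z' & r'\\ r' & 1-z'\end{pmatrix}.$$ Then there exists an incoherent operation (IO) $\Lambda$ with $\Lambda(\rho)=\rho'$ if and only if $$(1-z^2)\,r'^2\le (1-z'^2)\,r^2\qquad\text{and}\qquad |r'|\le |r|$$ (for $r\neq0$ the first condition reads $z'^2+(1-z^2)\,r'^2/r^2\le 1$). The same characterization holds with IO replaced by strictly incoherent operation (SIO).
   Context: Fix the computational (incoherent) basis $\{|0\rangle,|1\rangle\}$ of $\mathbb{C}^2$; a state is incoherent if it is diagonal in this basis. An incoherent operation (IO) is a quantum channel with Kraus operators $\{K_n\}$, $\sum_n K_n^\dagger K_n=I$, such that $K_n\delta K_n^\dagger$ is diagonal for every diagonal $\delta$ (equivalently, each $K_n$ has at most one nonzero entry in every column). A strictly incoherent operation (SIO) is an IO whose Kraus operators additionally satisfy that $K_n^\dagger\delta K_n$ is diagonal for every diagonal $\delta$ (equivalently, each $K_n$ has at most one nonzero entry in every row and every column). *)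

(* Defs.v *)
(* Scalars: an arbitrary numClosedFieldType C (e.g. complex
   numbers); "real number" = element of C that is Num.real. *)
From HB Require Import structures.
From mathcomp Require Import all_boot all_order all_algebra.
Set Implicit Arguments. Unset Strict Implicit. Unset Printing Implicit Defensive.
Import Order.TTheory GRing.Theory Num.Theory.
Local Open Scope ring_scope.

Section QubitDefs.
Variable C : numClosedFieldType.

Definition adjmx (A : 'M[C]_2) : 'M[C]_2 := \matrix_(i, j) (A j i)^*.

Definition diagonal (A : 'M[C]_2) : Prop := forall i j : 'I_2, i != j -> A i j = 0.

Definition kraus_complete (n : nat) (K : 'I_n -> 'M[C]_2) : Prop :=
  \sum_(k < n) adjmx (K k) *m K k = 1%:M.

Definition apply_kraus (n : nat) (K : 'I_n -> 'M[C]_2) (rho : 'M[C]_2) : 'M[C]_2 :=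
  \sum_(k < n) K k *m rho *m adjmx (K k).

Definition IO_kraus (n : nat) (K : 'I_n -> 'M[C]_2) : Prop :=
  kraus_complete K /\
  forall k, forall d : 'M[C]_2, diagonal d -> diagonal (K k *m d *m adjmx (K k)).

Definition SIO_kraus (n : nat) (K : 'I_n -> 'M[C]_2) : Prop :=
  IO_kraus K /\
  forall k, forall d : 'M[C]_2, diagonal d -> diagonal (adjmx (K k) *m d *m K k).

Definition qubit_state (z r : C) : 'M[C]_2 :=
  2^-1 *: \matrix_(i < 2, j < 2)
     (if i == j then (if i == 0 :> nat then 1 + z else 1 - z) else r).

End QubitDefs.

(* Main.v *)
Require Import Defs.
From HB Require Import structures.
From mathcomp Require Import all_boot all_order all_algebra.
From mathcomp Require Import ring lra.
Set Implicit Arguments. Unset Strict Implicit. Unset Printing Implicit Defensive.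
Import Order.TTheory GRing.Theory Num.Theory.
Local Open Scope ring_scope.
Section RL1.
Variable R : realFieldType.
Lemma amgm (p A B : R) : 0 <= p -> 0 <= A -> 0 <= B -> p ^+ 2 <= A * B -> 2 * p <= A + B.
Proof.
move=> hp hA hB h. rewrite leNgt; apply/negP => h2.
have h3 : (A + B) ^+ 2 < (2 * p) ^+ 2.
  by rewrite ltr_pXn2r // ?nnegrE ?addr_ge0 ?mulr_ge0.
have h4 : 0 <= (A - B) ^+ 2 := sqr_ge0 _.
nra.
Qed.

Lemma cs_step (m U u X Y x y : R) : 0 <= m -> 0 <= U -> 0 <= u -> 0 <= X -> 0 <= Y -> 0 <= x -> 0 <= y ->
  m * U ^+ 2 <= X * Y -> m * u ^+ 2 <= x * y -> m * (U + u) ^+ 2 <= (X + x) * (Y + y).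
Proof.
move=> hm hU hu hX hY hx hy h1 h2.
have h3 : (m * U * u) ^+ 2 <= (X * y) * (x * Y).
  have -> : (m * U * u) ^+ 2 = (m * U ^+ 2) * (m * u ^+ 2) by ring.
  have -> : (X * y) * (x * Y) = (X * Y) * (x * y) by ring.
  by apply: ler_pM => //; rewrite mulr_ge0 ?exprn_ge0.
have := amgm (mulr_ge0 (mulr_ge0 hm hU) hu) (mulr_ge0 hX hy) (mulr_ge0 hx hY) h3.
nra.
Qed.

Lemma cs_sum n (m : R) (u x y : 'I_n -> R) : 0 <= m ->
  (forall k, [/\ 0 <= u k, 0 <= x k, 0 <= y k & m * u k ^+ 2 <= x k * y k]) ->
  m * (\sum_k u k) ^+ 2 <= (\sum_k x k) * (\sum_k y k).
Proof.
elim: n u x y => [|n IH] u x y hm h.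
  by rewrite !big_ord0 expr0n /= mulr0 mul0r.
rewrite !big_ord_recr /=.
have [h1 h2 h3 h4] := h ord_max.
apply: cs_step => //; try (apply: sumr_ge0 => i _; have [? ? ? ?] := h (widen_ord (leqnSn n) i); done).
exact: IH.
Qed.

Lemma pos_lem (P Q c a b : R) : 0 <= P -> 0 <= Q -> c ^+ 2 <= P * Q -> 0 <= a -> 0 <= b ->
  2 * (`|c| * a * b) <= P * a ^+ 2 + Q * b ^+ 2.
Proof.
move=> hP hQ hc ha hb.
apply: amgm; rewrite ?mulr_ge0 ?exprn_ge0 //.
have -> : (`|c| * a * b) ^+ 2 = `|c| ^+ 2 * (a ^+ 2 * b ^+ 2) by ring.
rewrite real_normK ?num_real //.
have -> : P * a ^+ 2 * (Q * b ^+ 2) = (P * Q) * (a ^+ 2 * b ^+ 2) by ring.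
by apply: ler_wpM2r; rewrite ?mulr_ge0 ?exprn_ge0.
Qed.

Lemma final_lem (z r z' r' S : R) : 0 <= 1 - z ^+ 2 -> 0 <= S -> S ^+ 2 <= 1 ->
  (1 - z ^+ 2) * S ^+ 2 <= 1 - z' ^+ 2 -> `|r'| <= `|r| * S ->
  (1 - z ^+ 2) * r' ^+ 2 <= (1 - z' ^+ 2) * r ^+ 2 /\ `|r'| <= `|r|.
Proof.
move=> hz hS hS1 h hr.
have hS1' : S <= 1 by nra.
have har := normr_ge0 r; have har' := normr_ge0 r'.
rewrite -(real_normK (num_real r)) -(real_normK (num_real r')).
split; last by nra.
have h2 : `|r'| ^+ 2 <= `|r| ^+ 2 * S ^+ 2.
  by rewrite -exprMn ler_pXn2r // ?nnegrE ?mulr_ge0.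
nra.
Qed.
Lemma suff_scalar (z r z' r' : R) : z ^+ 2 + r ^+ 2 <= 1 -> z' ^+ 2 + r' ^+ 2 <= 1 ->
  (1 - z ^+ 2) * r' ^+ 2 <= (1 - z' ^+ 2) * r ^+ 2 -> `|r'| <= `|r| ->
  exists s : R,
  [/\ 0 <= 2^-1 * (1 + z), 0 <= 2^-1 * (1 - z), 2^-1 * (1 + z) + 2^-1 * (1 - z) = 1,
      0 <= 2^-1 * (1 + z') & 2^-1 * (1 + z') <= 1] /\
  [/\ s ^+ 2 <= 1,
      2^-1 * (1 + z) * (2^-1 * (1 - z)) * s ^+ 2 <= 2^-1 * (1 + z') * (1 - 2^-1 * (1 + z')),
      (2^-1 * (1 + z) * (2^-1 * (1 - z)) = 0 -> s = 0)
    & 2^-1 * r * s = 2^-1 * r'].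
Proof.
move=> h1 h2 h3 h4.
have hr2 := sqr_ge0 r; have hr2' := sqr_ge0 r'.
have hz1 : z <= 1 by nra.
have hz2 : -1 <= z by nra.
have hz1' : z' <= 1 by nra.
have hz2' : -1 <= z' by nra.
have hi : (0 : R) <= 2^-1 by rewrite invr_ge0 ler0n.
have G1 : [/\ 0 <= 2^-1 * (1 + z), 0 <= 2^-1 * (1 - z), 2^-1 * (1 + z) + 2^-1 * (1 - z) = 1,
      0 <= 2^-1 * (1 + z') & 2^-1 * (1 + z') <= 1].
  split; rewrite ?mulr_ge0 ?subr_ge0 //; try lra.
have eqq : 2^-1 * (1 + z') * (1 - 2^-1 * (1 + z')) = (1 - z' ^+ 2) / 4 by field.
have eqP' : 2^-1 * (1 + z) * (2^-1 * (1 - z)) = (1 - z ^+ 2) / 4 by field.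
have [r0|rn0] := eqVneq r 0.
  have r'0 : r' = 0 by apply/eqP; rewrite -normr_le0 -(normr0 R) -r0.
  exists 0; split => //; split.
  - by rewrite expr0n ler01.
  - by rewrite eqq expr0n /= mulr0 divr_ge0 // ?ler0n //; nra.
  - by [].
  - by rewrite r0 r'0 !mulr0.
have hrp : 0 < r ^+ 2 by rewrite exprn_even_gt0.
exists (r' / r); split => //; split.
- rewrite expr_div_n ler_pdivrMr // mul1r.
  by rewrite -(real_normK (num_real r)) -(real_normK (num_real r')) ler_pXn2r // nnegrE.
- rewrite eqq eqP' expr_div_n.
  have -> : (1 - z ^+ 2) / 4 * (r' ^+ 2 / r ^+ 2) = ((1 - z ^+ 2) * r' ^+ 2) / (4 * r ^+ 2).
    by field.
  have -> : (1 - z' ^+ 2) / 4 = ((1 - z' ^+ 2) * r ^+ 2) / (4 * r ^+ 2).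
    by field.
  by rewrite ler_pM2r // invr_gt0 mulr_gt0.
- rewrite eqP' => e; exfalso.
  have ez : 1 - z ^+ 2 = 0.
    by apply/eqP; move/eqP: e; rewrite mulf_eq0 invr_eq0 pnatr_eq0 orbF.
  have : r ^+ 2 <= 0 by nra.
  by rewrite leNgt hrp.
- by field.
Qed.
Lemma cs2R (a b e f : R) : 0 <= a -> 0 <= b -> 0 <= e -> 0 <= f ->
  1 * (a * f + b * e) ^+ 2 <= (a ^+ 2 + e ^+ 2) * (b ^+ 2 + f ^+ 2).
Proof. move=> *; have := sqr_ge0 (a * b - e * f); nra. Qed.

Lemma stateR (z r : R) : z ^+ 2 + r ^+ 2 <= 1 ->
  [/\ 0 <= 2^-1 * (1 + z), 0 <= 2^-1 * (1 - z),
      (2^-1 * r) ^+ 2 <= 2^-1 * (1 + z) * (2^-1 * (1 - z)) & 0 <= 1 - z ^+ 2].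
Proof.
move=> h. have := sqr_ge0 r => hr.
have hz1 : z <= 1 by nra.
have hz2 : -1 <= z by nra.
have hi : (0 : R) <= 2^-1 by rewrite invr_ge0 ler0n.
split.
- apply: mulr_ge0 => //; lra.
- apply: mulr_ge0 => //; lra.
- have -> : (2^-1 * r) ^+ 2 = r ^+ 2 / 4 by field.
  have -> : 2^-1 * (1 + z) * (2^-1 * (1 - z)) = (1 - z ^+ 2) / 4 by field.
  by rewrite ler_pM2r ?invr_gt0 ?ltr0n //; lra.
- nra.
Qed.

Lemma final2 (z r z' r' S : R) : z ^+ 2 + r ^+ 2 <= 1 -> 0 <= S -> 1 * S ^+ 2 <= 1 * 1 ->
  2^-1 * (1 + z) * (2^-1 * (1 - z)) * S ^+ 2 <= 2^-1 * (1 + z') * (2^-1 * (1 - z')) ->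
  `|2^-1 * r'| <= `|2^-1 * r| * S ->
  (1 - z ^+ 2) * r' ^+ 2 <= (1 - z' ^+ 2) * r ^+ 2 /\ `|r'| <= `|r|.
Proof.
move=> h hS hS1 hB hr.
have [_ _ _ hz] := stateR h.
apply: (final_lem (S := S)) => //.
- by rewrite !mul1r in hS1.
- have e1 : 2^-1 * (1 + z) * (2^-1 * (1 - z)) * S ^+ 2 = ((1 - z ^+ 2) * S ^+ 2) / 4 by field.
  have e2 : 2^-1 * (1 + z') * (2^-1 * (1 - z')) = (1 - z' ^+ 2) / 4 by field.
  by move: hB; rewrite e1 e2 ler_pM2r ?invr_gt0 ?ltr0n.
- move: hr; rewrite !normrM ger0_norm ?invr_ge0 ?ler0n // -mulrA ler_pM2l //.
  by rewrite invr_gt0 ltr0n.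
Qed.
End RL1.

Section RL2.
Variable R : realFieldType.
Variable sq : R -> R.
Hypothesis hsq : forall a, 0 <= a -> 0 <= sq a /\ sq a ^+ 2 = a.

Lemma sq_ge0 a : 0 <= a -> 0 <= sq a. Proof. by case/hsq. Qed.
Lemma sqK a : 0 <= a -> sq a ^+ 2 = a. Proof. by case/hsq. Qed.

Lemma div_ge0_sq (a d : R) : d != 0 -> 0 <= a * d -> 0 <= a / d.
Proof.
move=> hd h. have -> : a / d = (a * d) / (d ^+ 2) by field.
by rewrite divr_ge0 // sqr_ge0.
Qed.

Lemma exist_G (P Q q s : R) : 0 <= P -> 0 <= Q -> P + Q = 1 -> 0 <= q -> q <= 1 ->
  s ^+ 2 <= 1 -> P * Q * s ^+ 2 <= q * (1 - q) -> (P * Q = 0 -> s = 0) ->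
  exists x y xb yb : R, [/\ 0 <= x, 0 <= y, 0 <= xb & 0 <= yb] /\
   [/\ x ^+ 2 + xb ^+ 2 = 1, y ^+ 2 + yb ^+ 2 = 1, P * x ^+ 2 + Q * yb ^+ 2 = q
     & s ^+ 2 <= (x * y + xb * yb) ^+ 2].
Proof.
move=> hP hQ hPQ hq0 hq1 hs1 hs h0.
have hq1' : 0 <= 1 - q by rewrite subr_ge0.
have [PQ0|PQn0] := eqVneq (P * Q) 0.
  rewrite (h0 PQ0).
  exists (sq q), (sq (1 - q)), (sq (1 - q)), (sq q).
  rewrite !sqK // !sq_ge0 //; split => //; split; [ring|ring|by rewrite -mulrDl hPQ mul1r|by rewrite expr2 mul0r sqr_ge0].
have eQ : Q = 1 - P by rewrite -hPQ; ring.
have hP0 : P != 0 by apply: contraNneq PQn0 => ->; rewrite mul0r.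
have hQ0 : Q != 0 by apply: contraNneq PQn0 => ->; rewrite mulr0.
have hPp : 0 < P by rewrite lt_def hP0.
have hQp : 0 < Q by rewrite lt_def hQ0.
have [hA|hB] := lerP ((q - P) * (q - Q)) 0.
  pose l := if P == Q then 1 else (q - Q) / (P - Q).
  have [hl0 hl1 hlq] : [/\ 0 <= l, 0 <= 1 - l & l * P + (1 - l) * Q = q].
    rewrite /l; case: eqVneq => [eP|nP].
      rewrite -eP; move: hA; rewrite -eP => hA.
      have eq : q = P.
        apply/eqP; rewrite -subr_eq0 -(sqrf_eq0 (q - P)); apply/eqP/le_anti.
        by rewrite sqr_ge0 andbT expr2.
      by split; rewrite ?subrr // eq; ring.
    have hd : P - Q != 0 by rewrite subr_eq0.
    split.
    - apply: div_ge0_sq => //; have := sqr_ge0 (q - Q); nra.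
    - have -> : 1 - (q - Q) / (P - Q) = (P - q) / (P - Q) by field.
      apply: div_ge0_sq => //; have := sqr_ge0 (q - P); nra.
    - by field.
  exists (sq l), (sq l), (sq (1 - l)), (sq (1 - l)).
  rewrite !sq_ge0 //; split => //.
  rewrite -!expr2 !sqK // -hlq; split; try ring.
  by rewrite addrC subrK expr1n.
have hd : 2 * q - 1 != 0.
  apply/negP => /eqP hd.
  have e : (q - P) * (q - Q) = - (q - P) ^+ 2 + (q - P) * (2 * q - 1) by rewrite eQ; ring.
  move: hB; rewrite e hd mulr0 addr0 oppr_gt0 => h.
  by have := sqr_ge0 (q - P); rewrite leNgt h.
have hdd : 2 * q - 1 = (q - Q) + (q - P) by rewrite eQ; ring.
pose L := (q - Q) / (2 * q - 1).
have hL0 : 0 <= L by apply: div_ge0_sq => //; rewrite hdd; have := sqr_ge0 (q - Q); nra.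
have hL1 : 0 <= 1 - L.
  have -> : 1 - L = (q - P) / (2 * q - 1) by rewrite /L eQ; field.
  apply: div_ge0_sq => //; rewrite hdd; have := sqr_ge0 (q - P); nra.
have hPQp : 0 < P * Q by rewrite mulr_gt0.
have hPQ' := ltW hPQp.
pose g := sq (q * (1 - q) / (P * Q)).
have hqq : 0 <= q * (1 - q) / (P * Q) by apply: divr_ge0 => //; apply: mulr_ge0.
have hg0 : 0 <= g := sq_ge0 hqq.
have a1 : 0 <= L * q / P by apply: divr_ge0 => //; apply: mulr_ge0.
have a2 : 0 <= L * (1 - q) / Q by apply: divr_ge0 => //; apply: mulr_ge0.
have a3 : 0 <= (1 - L) * (1 - q) / P by apply: divr_ge0 => //; apply: mulr_ge0.
have a4 : 0 <= (1 - L) * q / Q by apply: divr_ge0 => //; apply: mulr_ge0.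
exists (sq (L * q / P)), (sq (L * (1 - q) / Q)), (sq ((1 - L) * (1 - q) / P)), (sq ((1 - L) * q / Q)).
rewrite !sq_ge0 //; split => //.
have e1 : sq (L * q / P) * sq (L * (1 - q) / Q) = L * g.
  apply/eqP; rewrite -(@eqrXn2 _ 2 _ _ erefl (mulr_ge0 (sq_ge0 a1) (sq_ge0 a2)) (mulr_ge0 hL0 hg0)).
  by rewrite !exprMn (sqK a1) (sqK a2) /g (sqK hqq); apply/eqP; rewrite /L; field; rewrite hd hP0 hQ0.
have e2 : sq ((1 - L) * (1 - q) / P) * sq ((1 - L) * q / Q) = (1 - L) * g.
  apply/eqP; rewrite -(@eqrXn2 _ 2 _ _ erefl (mulr_ge0 (sq_ge0 a3) (sq_ge0 a4)) (mulr_ge0 hL1 hg0)).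
  by rewrite !exprMn (sqK a3) (sqK a4) /g (sqK hqq); apply/eqP; rewrite /L; field; rewrite hd hP0 hQ0.
have hQ0' : 1 - P != 0 by rewrite -eQ.
rewrite e1 e2 (sqK a1) (sqK a2) (sqK a3) (sqK a4); split.
- rewrite /L ?eQ; field; by rewrite ?hd ?hP0 ?hQ0'.
- rewrite /L ?eQ; field; by rewrite ?hd ?hP0 ?hQ0'.
- rewrite /L ?eQ; field; by rewrite ?hd ?hP0 ?hQ0'.
- have -> : L * g + (1 - L) * g = g by ring.
  rewrite /g sqK // ler_pdivlMr //; nra.
Qed.

Lemma exist_all (P Q q s : R) : 0 <= P -> 0 <= Q -> P + Q = 1 -> 0 <= q -> q <= 1 ->
  s ^+ 2 <= 1 -> P * Q * s ^+ 2 <= q * (1 - q) -> (P * Q = 0 -> s = 0) ->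
  exists x y xb yb sw sw' : R,
   [/\ x ^+ 2 + xb ^+ 2 = 1, y ^+ 2 + yb ^+ 2 = 1, sw ^+ 2 + sw' ^+ 2 = 1,
       P * x ^+ 2 + Q * yb ^+ 2 = q
     & (sw ^+ 2 - sw' ^+ 2) * (x * y + xb * yb) = s].
Proof.
move=> hP hQ hPQ hq0 hq1 hs1 hs h0.
have [x [y [xb [yb [[hx hy hxb hyb] [e1 e2 e3 hG]]]]]] := exist_G hP hQ hPQ hq0 hq1 hs1 hs h0.
exists x, y, xb, yb.
set G := x * y + xb * yb.
have hG0 : 0 <= G by rewrite addr_ge0 ?mulr_ge0.
have [G0|Gn0] := eqVneq G 0.
  have s0 : s = 0.
    move: hG; rewrite -/G G0 expr0n /= => h.
    by apply/eqP; rewrite -(sqrf_eq0 s); apply/eqP/le_anti; rewrite h sqr_ge0.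
  have h2 : (0 : R) <= 2^-1 by rewrite invr_ge0 ler0n.
  exists (sq 2^-1), (sq 2^-1); rewrite (sqK h2) s0 subrr mul0r; split => //.
  by field.
pose t := s / G.
have ht : t ^+ 2 <= 1.
  rewrite /t expr_div_n ler_pdivrMr ?mul1r //.
  by rewrite exprn_gt0 // lt_def Gn0.
have ht1 : 0 <= (1 + t) / 2 by rewrite divr_ge0 // ?ler0n; nra.
have ht2 : 0 <= (1 - t) / 2 by rewrite divr_ge0 // ?ler0n; nra.
exists (sq ((1 + t) / 2)), (sq ((1 - t) / 2)); rewrite (sqK ht1) (sqK ht2); split => //.
- by field.
- by rewrite /t; field.
Qed.
End RL2.

Section Re.
Variable C : numClosedFieldType.
Definition Rt := {x : C | x \is Num.real}.
HB.instance Definition _ := [isSub of Rt for (@sval C (fun x => x \is Num.real))].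
HB.instance Definition _ := [Choice of Rt by <:].
HB.instance Definition _ := [SubChoice_isSubIntegralDomain of Rt by <:].
HB.instance Definition _ := [SubIntegralDomain_isSubField of Rt by <:].
Definition Rle (x y : Rt) := (val x <= val y).
Definition Rlt (x y : Rt) := (val x < val y).
Definition Rnorm (x : Rt) : Rt := Sub `|val x| (normr_real _).
Lemma Rle0_add (x y : Rt) : Rle 0 x -> Rle 0 y -> Rle 0 (x + y).
Proof. rewrite /Rle /= => *; exact: addr_ge0. Qed.
Lemma Rle0_mul (x y : Rt) : Rle 0 x -> Rle 0 y -> Rle 0 (x * y).
Proof. rewrite /Rle /= => *; exact: mulr_ge0. Qed.
Lemma Rle0_anti (x : Rt) : Rle 0 x -> Rle x 0 -> x = 0.
Proof. rewrite /Rle /= => a b; apply: val_inj; apply/eqP; rewrite /= eq_le a b. by []. Qed.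
Lemma Rsub_ge0 (x y : Rt) : Rle 0 (y - x) = Rle x y.
Proof. by rewrite /Rle /= subr_ge0. Qed.
Lemma Rle0_total (x : Rt) : Rle 0 x || Rle x 0.
Proof. rewrite /Rle /=; exact: (valP x). Qed.
Lemma RnormN (x : Rt) : Rnorm (- x) = Rnorm x.
Proof. apply: val_inj; by rewrite /= normrN. Qed.
Lemma Rge0_norm (x : Rt) : Rle 0 x -> Rnorm x = x.
Proof. rewrite /Rle => h; apply: val_inj; by rewrite /= ger0_norm. Qed.
Lemma Rlt_def (x y : Rt) : Rlt x y = (y != x) && Rle x y.
Proof. by rewrite /Rlt /Rle lt_def. Qed.
HB.instance Definition _ := Num.IntegralDomain_isLeReal.Build Rt Rle0_add Rle0_mul Rle0_anti Rsub_ge0 Rle0_total RnormN Rge0_norm Rlt_def.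
End Re.

Notation i0 := (@ord0 1).
Notation i1 := (@lift 2 ord0 ord0).
Section S.
Variable C : numClosedFieldType.
Lemma tri_entry (K A : 'M[C]_2) (i l : 'I_2) :
  (K *m A *m adjmx K) i l =
  K i i0 * A i0 i0 * (K l i0)^* + K i i0 * A i0 i1 * (K l i1)^* +
  K i i1 * A i1 i0 * (K l i0)^* + K i i1 * A i1 i1 * (K l i1)^*.
Proof.
rewrite /adjmx !mxE !big_ord_recl !big_ord0 !mxE !big_ord_recl !big_ord0 !addr0.
move: (K l i0)^* (K l i1)^* => u v; ring.
Qed.
Lemma adj_entry (K : 'M[C]_2) (i l : 'I_2) :
  (adjmx K *m K) i l = (K i0 i)^* * K i0 l + (K i1 i)^* * K i1 l.
Proof. by rewrite /adjmx !mxE !big_ord_recl !big_ord0 !mxE addr0. Qed.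
Lemma adjmxK (K : 'M[C]_2) : adjmx (adjmx K) = K.
Proof. apply/matrixP=> i j; by rewrite /adjmx !mxE conjCK. Qed.
Lemma ord2_cases (i : 'I_2) : i = i0 \/ i = i1.
Proof. case: i => [[|[|]]] // h; [left|right]; exact: val_inj. Qed.


Definition toR (x : C) : Rt C := insubd 0 x.
Lemma toRE x : x \is Num.real -> val (toR x) = x.
Proof. by move=> h; rewrite val_insubd h. Qed.
Lemma liftP (x : C) : x \is Num.real -> exists X : Rt C, x = val X.
Proof. by move=> h; exists (toR x); rewrite toRE. Qed.
Definition sqR (a : Rt C) : Rt C := toR (sqrtC (val a)).
Lemma hsqR (a : Rt C) : 0 <= a -> 0 <= sqR a /\ sqR a ^+ 2 = a.
Proof.
move=> ha. have ha' : 0 <= val a := ha.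
have hr : sqrtC (val a) \is Num.real by apply: sqrtC_real.
split.
- change (0 <= val (sqR a)). by rewrite /sqR toRE // sqrtC_ge0.
- apply: val_inj. change (val (sqR a) ^+ 2 = val a). by rewrite /sqR toRE // sqrtCK.
Qed.
Lemma valsum n (F : 'I_n -> Rt C) : val (\sum_k F k) = \sum_k val (F k).
Proof. by apply: (big_morph (fun x : Rt C => val x) (id1 := 0) (op1 := +%R)). Qed.

Lemma exist_C (P Q q s : C) : P \is Num.real -> Q \is Num.real -> q \is Num.real ->
  s \is Num.real -> 0 <= P -> 0 <= Q -> P + Q = 1 -> 0 <= q -> q <= 1 ->
  s ^+ 2 <= 1 -> P * Q * s ^+ 2 <= q * (1 - q) -> (P * Q = 0 -> s = 0) ->
  exists x y xb yb sw sw' : C,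
   [/\ x \is Num.real, y \is Num.real, xb \is Num.real & yb \is Num.real] /\
   (sw \is Num.real /\ sw' \is Num.real) /\
   [/\ x ^+ 2 + xb ^+ 2 = 1, y ^+ 2 + yb ^+ 2 = 1, sw ^+ 2 + sw' ^+ 2 = 1,
       P * x ^+ 2 + Q * yb ^+ 2 = q
     & (sw ^+ 2 - sw' ^+ 2) * (x * y + xb * yb) = s].
Proof.
move=> /liftP[P' ->] /liftP[Q' ->] /liftP[q' ->] /liftP[s' ->] h1 h2 h3 h4 h5 h6 h7 h8.
have h3' : P' + Q' = 1 by apply: val_inj.
have h8' : P' * Q' = 0 -> s' = 0 by move=> e; apply: val_inj; exact: h8 (congr1 val e).
have [x [y [xb [yb [sw [sw' [e1 e2 e3 e4 e5]]]]]]] :=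
  exist_all hsqR (h1 : 0 <= P') (h2 : 0 <= Q') h3' (h4 : 0 <= q') (h5 : q' <= 1)
    (h6 : s' ^+ 2 <= 1) (h7 : P' * Q' * s' ^+ 2 <= q' * (1 - q')) h8'.
exists (val x), (val y), (val xb), (val yb), (val sw), (val sw'); split.
  by split; apply: valP.
split; first by split; apply: valP.
by split; [exact (congr1 val e1)|exact (congr1 val e2)|exact (congr1 val e3)
  |exact (congr1 val e4)|exact (congr1 val e5)].
Qed.


Lemma qsE (z r : C) :
  [/\ qubit_state z r i0 i0 = 2^-1 * (1 + z), qubit_state z r i0 i1 = 2^-1 * r,
      qubit_state z r i1 i0 = 2^-1 * r & qubit_state z r i1 i1 = 2^-1 * (1 - z)].
Proof. by rewrite /qubit_state !mxE /=. Qed.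

Definition dg (a b : C) : 'M[C]_2 :=
  \matrix_(i, j) (if i == j then (if i == i0 then a else b) else 0).
Definition ad (a b : C) : 'M[C]_2 :=
  \matrix_(i, j) (if i == j then 0 else (if j == i0 then a else b)).
Lemma dgE a b : [/\ dg a b i0 i0 = a, dg a b i0 i1 = 0, dg a b i1 i0 = 0 & dg a b i1 i1 = b].
Proof. by rewrite /dg !mxE. Qed.
Lemma adE a b : [/\ ad a b i0 i0 = 0, ad a b i0 i1 = b, ad a b i1 i0 = a & ad a b i1 i1 = 0].
Proof. by rewrite /ad !mxE. Qed.

Definition Kf (x y xb yb sw sw' : C) (k : 'I_4) : 'M[C]_2 :=
  match val k with
  | 0 => dg (sw * x) (sw * y)
  | 1 => dg (sw' * x) (- (sw' * y))
  | 2 => ad (sw * xb) (sw * yb)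
  | _ => ad (sw' * xb) (- (sw' * yb))
  end.

Lemma sum4 (T : 'I_4 -> C) : \sum_(k < 4) T k =
  T ord0 + T (lift ord0 ord0) + T (lift ord0 (lift ord0 ord0))
  + T (lift ord0 (lift ord0 (lift ord0 ord0))).
Proof. by rewrite !big_ord_recl big_ord0 addr0 !addrA. Qed.

Lemma pat_diag (K d : 'M[C]_2) :
  (K i1 i0 = 0 /\ K i0 i1 = 0) \/ (K i0 i0 = 0 /\ K i1 i1 = 0) ->
  diagonal d -> diagonal (K *m d *m adjmx K).
Proof.
move=> hK hd i j hij.
have d01 := hd i0 i1 isT; have d10 := hd i1 i0 isT.
rewrite tri_entry d01 d10.
case: (ord2_cases i) => ei; case: (ord2_cases j) => ej; subst i j => //;
  case: hK => [[-> ->]|[-> ->]]; rewrite ?conjC0; ring.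
Qed.


Lemma conjM (a b : C) : (a * b)^* = a^* * b^*. Proof. exact: rmorphM. Qed.
Lemma conjN (a : C) : (- a)^* = - a^*. Proof. exact: rmorphN. Qed.

Lemma pat_adj (K : 'M[C]_2) :
  (K i1 i0 = 0 /\ K i0 i1 = 0) \/ (K i0 i0 = 0 /\ K i1 i1 = 0) ->
  (adjmx K i1 i0 = 0 /\ adjmx K i0 i1 = 0) \/ (adjmx K i0 i0 = 0 /\ adjmx K i1 i1 = 0).
Proof. by rewrite /adjmx !mxE => -[[-> ->]|[-> ->]]; rewrite conjC0; [left|right]. Qed.

Section Kraus.
Variables x y xb yb sw sw' : C.
Hypothesis rx : x \is Num.real.
Hypothesis ry : y \is Num.real.
Hypothesis rxb : xb \is Num.real.
Hypothesis ryb : yb \is Num.real.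
Hypothesis rsw : sw \is Num.real.
Hypothesis rsw' : sw' \is Num.real.
Hypothesis ew : sw ^+ 2 + sw' ^+ 2 = 1.
Hypothesis ex : x ^+ 2 + xb ^+ 2 = 1.
Hypothesis ey : y ^+ 2 + yb ^+ 2 = 1.

Let K := Kf x y xb yb sw sw'.

Lemma Kf_pat k : (K k i1 i0 = 0 /\ K k i0 i1 = 0) \/ (K k i0 i0 = 0 /\ K k i1 i1 = 0).
Proof.
rewrite /K /Kf; case: k => [[|[|[|[|]]]] //] _ /=;
  by [left; rewrite /dg !mxE | right; rewrite /ad !mxE].
Qed.

Lemma Kf_SIO : SIO_kraus K.
Proof.
split; [split|].
- apply/matrixP => i j; rewrite summxE sum4 !adj_entry /K /Kf /=.
  have cx : forall a : C, a \is Num.real -> a^* = a by move=> a; exact: conj_Creal.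
  case: (ord2_cases i) => ->; case: (ord2_cases j) => ->;
    rewrite /dg /ad !mxE /= ?conjC0 ?conjN ?conjM ?conjN ?conjM; rewrite ?cx //.
  + by transitivity ((sw ^+ 2 + sw' ^+ 2) * (x ^+ 2 + xb ^+ 2)); [ring|rewrite ew ex mulr1].
  + ring.
  + ring.
  + by transitivity ((sw ^+ 2 + sw' ^+ 2) * (y ^+ 2 + yb ^+ 2)); [ring|rewrite ew ey mulr1].
- move=> k d hd; apply: pat_diag => //; exact: Kf_pat.
- move=> k d hd; rewrite -{2}(adjmxK (K k)); apply: pat_diag => //.
  apply: pat_adj; exact: Kf_pat.
Qed.
Lemma Kf_out (z r z' r' s : C) :
  2^-1 * (1 + z) * x ^+ 2 + 2^-1 * (1 - z) * yb ^+ 2 = 2^-1 * (1 + z') ->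
  (sw ^+ 2 - sw' ^+ 2) * (x * y + xb * yb) = s ->
  2^-1 * r * s = 2^-1 * r' ->
  apply_kraus K (qubit_state z r) = qubit_state z' r'.
Proof.
move=> eq es ec.
have cx : forall a : C, a \is Num.real -> a^* = a by move=> a; exact: conj_Creal.
have [q00 q01 q10 q11] := qsE z r.
have [p00 p01 p10 p11] := qsE z' r'.
apply/matrixP => i j; rewrite /apply_kraus summxE sum4 !tri_entry q00 q01 q10 q11 /K /Kf /=.
case: (ord2_cases i) => ->; case: (ord2_cases j) => ->;
  rewrite ?p00 ?p01 ?p10 ?p11 /dg /ad !mxE /= ?conjC0 ?conjN ?conjM ?conjN ?conjM; rewrite ?cx //.
- transitivity ((sw ^+ 2 + sw' ^+ 2) * (2^-1 * (1 + z) * x ^+ 2 + 2^-1 * (1 - z) * yb ^+ 2)).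
    ring.
  by rewrite ew mul1r eq.
- transitivity ((sw ^+ 2 - sw' ^+ 2) * (x * y + xb * yb) * (2^-1 * r)).
    ring.
  by rewrite es mulrC ec.
- transitivity ((sw ^+ 2 - sw' ^+ 2) * (x * y + xb * yb) * (2^-1 * r)).
    ring.
  by rewrite es mulrC ec.
- transitivity ((sw ^+ 2 + sw' ^+ 2) * (2^-1 * (1 - z) * (y ^+ 2 + yb ^+ 2)
     + 2^-1 * (1 + z) * (x ^+ 2 + xb ^+ 2) - (2^-1 * (1 + z) * x ^+ 2 + 2^-1 * (1 - z) * yb ^+ 2))).
    ring.
  rewrite ew ey ex eq; ring.
Qed.
End Kraus.


Lemma suffC (z r z' r' : C) : z \is Num.real -> r \is Num.real -> z' \is Num.real ->
  r' \is Num.real -> z ^+ 2 + r ^+ 2 <= 1 -> z' ^+ 2 + r' ^+ 2 <= 1 ->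
  (1 - z ^+ 2) * r' ^+ 2 <= (1 - z' ^+ 2) * r ^+ 2 -> `|r'| <= `|r| ->
  exists (n : nat) (K : 'I_n -> 'M[C]_2),
    SIO_kraus K /\ apply_kraus K (qubit_state z r) = qubit_state z' r'.
Proof.
move=> /liftP[Z ->] /liftP[Rr ->] /liftP[Z' ->] /liftP[Rr' ->] h1 h2 h3 h4.
have [s [[g1 g2 g3 g4 g5] [k1 k2 k3 k4]]] :=
  suff_scalar (h1 : Z ^+ 2 + Rr ^+ 2 <= 1) (h2 : Z' ^+ 2 + Rr' ^+ 2 <= 1)
    (h3 : (1 - Z ^+ 2) * Rr' ^+ 2 <= (1 - Z' ^+ 2) * Rr ^+ 2) (h4 : `|Rr'| <= `|Rr|).
have [x [y [xb [yb [sw [sw' [[rx ry rxb ryb] [[rsw rsw'] [e1 e2 e3 e4 e5]]]]]]]]] :=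
  @exist_C (2^-1 * (1 + val Z)) (2^-1 * (1 - val Z)) (2^-1 * (1 + val Z')) (val s)
     (valP (2^-1 * (1 + Z))) (valP (2^-1 * (1 - Z))) (valP (2^-1 * (1 + Z'))) (valP s)
     g1 g2 (congr1 val g3) g4 g5 k1 k2 (fun e => congr1 val (k3 (@val_inj _ _ _ (2^-1 * (1 + Z) * (2^-1 * (1 - Z))) 0 e))).
exists 4, (Kf x y xb yb sw sw'); split.
  exact: Kf_SIO.
exact: (Kf_out rx ry rxb ryb rsw rsw' e3 e1 e2 e4 e5 (congr1 val k4)).
Qed.


Lemma conjD (a b : C) : (a + b)^* = a^* + b^*. Proof. exact: rmorphD. Qed.

Lemma cs_sumC n (m : C) (u x y : 'I_n -> C) : 0 <= m ->
  (forall k, [/\ 0 <= u k, 0 <= x k, 0 <= y k & m * u k ^+ 2 <= x k * y k]) ->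
  m * (\sum_k u k) ^+ 2 <= (\sum_k x k) * (\sum_k y k).
Proof.
move=> hm h.
have ru k : u k \is Num.real by have [? _ _ _] := h k; exact: ger0_real.
have rx k : x k \is Num.real by have [_ ? _ _] := h k; exact: ger0_real.
have ry k : y k \is Num.real by have [_ _ ? _] := h k; exact: ger0_real.
pose U k := toR (u k). pose X k := toR (x k). pose Y k := toR (y k).
have eU : \sum_k u k = val (\sum_k U k).
  by rewrite valsum; apply: eq_bigr => k _; rewrite /U toRE.
have eX : \sum_k x k = val (\sum_k X k).
  by rewrite valsum; apply: eq_bigr => k _; rewrite /X toRE.
have eY : \sum_k y k = val (\sum_k Y k).
  by rewrite valsum; apply: eq_bigr => k _; rewrite /Y toRE.
have em : m = val (toR m) by rewrite toRE // ger0_real.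
rewrite eU eX eY em.
have hm' : 0 <= toR m by change (0 <= val (toR m)); rewrite -em.
have hk : forall k, [/\ 0 <= U k, 0 <= X k, 0 <= Y k & toR m * U k ^+ 2 <= X k * Y k].
  move=> k; have [h1 h2 h3 h4] := h k; split.
  - by change (0 <= val (U k)); rewrite /U toRE.
  - by change (0 <= val (X k)); rewrite /X toRE.
  - by change (0 <= val (Y k)); rewrite /Y toRE.
  - by change (val (toR m) * val (U k) ^+ 2 <= val (X k) * val (Y k)); rewrite /U /X /Y !toRE //; exact: ger0_real.
exact: (cs_sum hm' hk).
Qed.

Lemma pos_C (x y P Q c : C) : P \is Num.real -> Q \is Num.real -> c \is Num.real ->
  0 <= P -> 0 <= Q -> c ^+ 2 <= P * Q ->
  0 <= x * P * x^* + x * c * y^* + y * c * x^* + y * Q * y^*.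
Proof.
move=> rP rQ rc hP hQ hc.
set w := x * y^*.
have e : x * P * x^* + x * c * y^* + y * c * x^* + y * Q * y^* =
   (P * `|x| ^+ 2 + Q * `|y| ^+ 2) + c * (w + w^*).
  rewrite /w !normCK conjM conjCK; move: (x^*) (y^*) => xc yc; ring.
rewrite e.
set t := c * (w + w^*).
have rt : t \is Num.real.
  by rewrite /t rpredM // CrealE conjD conjCK addrC.
have ht : `|t| <= 2 * (`|c| * `|x| * `|y|).
  rewrite /t normrM -mulrA mulrCA ler_wpM2l //.
  apply: le_trans (ler_normD _ _) _.
  by rewrite norm_conjC /w normrM norm_conjC mulr2n mulrDl !mul1r.
have hA : 2 * (`|c| * `|x| * `|y|) <= P * `|x| ^+ 2 + Q * `|y| ^+ 2.
  case/liftP: rP => P' eP. case/liftP: rQ => Q' eQ. case/liftP: rc => c' ec.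
  case/liftP: (normr_real x) => a ea. case/liftP: (normr_real y) => b eb.
  rewrite eP eQ ec ea eb.
  have hP' : 0 <= P' by change (0 <= val P'); rewrite -eP.
  have hQ' : 0 <= Q' by change (0 <= val Q'); rewrite -eQ.
  have hc' : c' ^+ 2 <= P' * Q' by change (val c' ^+ 2 <= val P' * val Q'); rewrite -eP -eQ -ec.
  have ha : 0 <= a by change (0 <= val a); rewrite -ea.
  have hb : 0 <= b by change (0 <= val b); rewrite -eb.
  exact: (pos_lem hP' hQ' hc' ha hb).
rewrite -[t]opprK subr_ge0.
apply: le_trans hA.
apply: le_trans ht.
by rewrite -normrN real_ler_norm // rpredN.
Qed.


Lemma cs2C (a b e f : C) :
  1 * (`|a| * `|f| + `|b| * `|e|) ^+ 2 <= (`|a| ^+ 2 + `|e| ^+ 2) * (`|b| ^+ 2 + `|f| ^+ 2).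
Proof.
case/liftP: (normr_real a) => A eA. case/liftP: (normr_real b) => B eB.
case/liftP: (normr_real e) => E eE. case/liftP: (normr_real f) => F eF.
have hA : 0 <= A by change (0 <= val A); rewrite -eA.
have hB : 0 <= B by change (0 <= val B); rewrite -eB.
have hE : 0 <= E by change (0 <= val E); rewrite -eE.
have hF : 0 <= F by change (0 <= val F); rewrite -eF.
rewrite eA eB eE eF; exact: (cs2R hA hB hE hF).
Qed.

Lemma stateC (z r : C) : z \is Num.real -> r \is Num.real -> z ^+ 2 + r ^+ 2 <= 1 ->
  [/\ 0 <= 2^-1 * (1 + z), 0 <= 2^-1 * (1 - z),
      (2^-1 * r) ^+ 2 <= 2^-1 * (1 + z) * (2^-1 * (1 - z)) & 2^-1 * r \is Num.real].
Proof.
move=> /liftP[Z ->] /liftP[Rr ->] h.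
have [h1 h2 h3 _] := stateR (h : Z ^+ 2 + Rr ^+ 2 <= 1).
by split; [exact: h1|exact: h2|exact: h3|exact: (valP (2^-1 * Rr))].
Qed.

Lemma finalC (z r z' r' S : C) : z \is Num.real -> r \is Num.real -> z' \is Num.real ->
  r' \is Num.real -> 0 <= S -> z ^+ 2 + r ^+ 2 <= 1 -> 1 * S ^+ 2 <= 1 * 1 ->
  2^-1 * (1 + z) * (2^-1 * (1 - z)) * S ^+ 2 <= 2^-1 * (1 + z') * (2^-1 * (1 - z')) ->
  `|2^-1 * r'| <= `|2^-1 * r| * S ->
  (1 - z ^+ 2) * r' ^+ 2 <= (1 - z' ^+ 2) * r ^+ 2 /\ `|r'| <= `|r|.
Proof.
move=> /liftP[Z ->] /liftP[Rr ->] /liftP[Z' ->] /liftP[Rr' ->] hS.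
case/liftP: (ger0_real hS) => S' eS. rewrite eS in hS *.
move=> h1 h2 h3 h4.
have [e1 e2] := final2 (h1 : Z ^+ 2 + Rr ^+ 2 <= 1) (hS : 0 <= S') (h2 : 1 * S' ^+ 2 <= 1 * 1)
  (h3 : 2^-1 * (1 + Z) * (2^-1 * (1 - Z)) * S' ^+ 2 <= 2^-1 * (1 + Z') * (2^-1 * (1 - Z')))
  (h4 : `|2^-1 * Rr'| <= `|2^-1 * Rr| * S').
by split; [exact: e1|exact: e2].
Qed.

Lemma necC n (K : 'I_n -> 'M[C]_2) (z r z' r' : C) : z \is Num.real -> r \is Num.real ->
  z' \is Num.real -> r' \is Num.real -> z ^+ 2 + r ^+ 2 <= 1 ->
  IO_kraus K -> apply_kraus K (qubit_state z r) = qubit_state z' r' ->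
  (1 - z ^+ 2) * r' ^+ 2 <= (1 - z' ^+ 2) * r ^+ 2 /\ `|r'| <= `|r|.
Proof.
move=> hz hr hz' hr' h1 [hcomp hio] hout.
have [hP hQ hc rc] := stateC hz hr h1.
set P := 2^-1 * (1 + z) in hP hQ hc *.
set Q := 2^-1 * (1 - z) in hP hQ hc *.
set c := 2^-1 * r in hc rc *.
have rP : P \is Num.real := ger0_real hP.
have rQ : Q \is Num.real := ger0_real hQ.
set rho := qubit_state z r.
have [q00 q01 q10 q11] := qsE z r.
have [p00 p01 p10 p11] := qsE z' r'.
have H1 : forall k (j : 'I_2), K k i0 j = 0 \/ K k i1 j = 0.
  move=> k j.
  have hd : diagonal (delta_mx j j : 'M[C]_2).
    move=> a b hab; rewrite mxE; apply/eqP; rewrite pnatr_eq0 eqb0.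
    by apply/negP => /andP[/eqP ea /eqP eb]; rewrite ea eb eqxx in hab.
  have := hio k _ hd i0 i1 isT; rewrite tri_entry !mxE.
  case: (ord2_cases j) => -> /=; rewrite ?mulr1n ?mulr0n ?mulr1 ?mulr0 ?mul0r ?addr0 ?add0r;
    move/eqP; rewrite mulf_eq0 conjC_eq0 => /orP[/eqP|/eqP]; auto.
have Hs : forall i j, \sum_k (K k *m rho *m adjmx (K k)) i j = qubit_state z' r' i j.
  by move=> i j; rewrite -summxE -hout.
have Hc : forall i j, \sum_k (adjmx (K k) *m K k) i j = (1%:M : 'M[C]_2) i j.
  by move=> i j; rewrite -summxE hcomp.
pose u k := `|K k i0 i0| * `|K k i1 i1| + `|K k i0 i1| * `|K k i1 i0|.
pose ex k := `|K k i0 i0| ^+ 2 + `|K k i1 i0| ^+ 2.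
pose ey k := `|K k i0 i1| ^+ 2 + `|K k i1 i1| ^+ 2.
pose d0 k := (K k *m rho *m adjmx (K k)) i0 i0.
pose d1 k := (K k *m rho *m adjmx (K k)) i1 i1.
pose o k := (K k *m rho *m adjmx (K k)) i0 i1.
have hu k : 0 <= u k by rewrite /u addr_ge0 ?mulr_ge0.
have Sex : \sum_k ex k = 1.
  have := Hc i0 i0; rewrite mxE /= mulr1n => <-.
  by apply: eq_bigr => k _; rewrite adj_entry /ex -!normCKC.
have Sey : \sum_k ey k = 1.
  have := Hc i1 i1; rewrite mxE /= mulr1n => <-.
  by apply: eq_bigr => k _; rewrite adj_entry /ey -!normCKC.
have Sd0 : \sum_k d0 k = 2^-1 * (1 + z') by rewrite -p00 -Hs.
have Sd1 : \sum_k d1 k = 2^-1 * (1 - z') by rewrite -p11 -Hs.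
have So : \sum_k o k = 2^-1 * r' by rewrite -p01 -Hs.
have ho k : `|o k| <= `|c| * u k.
  have eo : o k = c * (K k i0 i0 * (K k i1 i1)^* + K k i0 i1 * (K k i1 i0)^*).
    rewrite /o tri_entry q00 q01 q10 q11 -/c.
    case: (H1 k i0) => ->; case: (H1 k i1) => ->; rewrite ?conjC0; ring.
  rewrite eo normrM ler_wpM2l //.
  apply: le_trans (ler_normD _ _) _.
  by rewrite !normrM !norm_conjC.
have hd k : [/\ 0 <= u k, 0 <= d0 k, 0 <= d1 k & P * Q * u k ^+ 2 <= d0 k * d1 k].
  rewrite /u /d0 /d1 !tri_entry q00 q01 q10 q11 -/c -/P -/Q.
  case: (H1 k i0) => e0; case: (H1 k i1) => e1; rewrite e0 e1 ?conjC0 ?normr0.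
  - (* row 0 empty *)
    split; rewrite ?mul0r ?mulr0 ?addr0 ?add0r ?expr0n ?lexx //=; first by apply: pos_C.
    by rewrite ?mulr0 ?mul0r lexx.
  - (* anti-diagonal: K00 = 0, K11 = 0 *)
    rewrite ?mul0r ?mulr0 ?addr0 ?add0r.
    have ea : forall a : C, a * Q * a^* = Q * `|a| ^+ 2.
      by move=> a; rewrite normCK; move: (a^*) => ac; ring.
    have eb : forall a : C, a * P * a^* = P * `|a| ^+ 2.
      by move=> a; rewrite normCK; move: (a^*) => ac; ring.
    rewrite ea eb; split.
    + by apply: mulr_ge0.
    + by apply: mulr_ge0 => //; rewrite exprn_ge0.
    + by apply: mulr_ge0 => //; rewrite exprn_ge0.
    + by rewrite le_eqVlt; apply/orP; left; apply/eqP; ring.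
  - (* diagonal: K10 = 0, K01 = 0 *)
    rewrite ?mul0r ?mulr0 ?addr0 ?add0r.
    have ea : forall a : C, a * Q * a^* = Q * `|a| ^+ 2.
      by move=> a; rewrite normCK; move: (a^*) => ac; ring.
    have eb : forall a : C, a * P * a^* = P * `|a| ^+ 2.
      by move=> a; rewrite normCK; move: (a^*) => ac; ring.
    rewrite ea eb; split.
    + by apply: mulr_ge0.
    + by apply: mulr_ge0 => //; rewrite exprn_ge0.
    + by apply: mulr_ge0 => //; rewrite exprn_ge0.
    + by rewrite le_eqVlt; apply/orP; left; apply/eqP; ring.
  - (* row 1 empty *)
    split; rewrite ?mul0r ?mulr0 ?addr0 ?add0r ?expr0n ?lexx //=; first by apply: pos_C.
    by rewrite ?mulr0 ?mul0r lexx.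
have CS1 : 1 * (\sum_k u k) ^+ 2 <= (\sum_k ex k) * (\sum_k ey k).
  apply: cs_sumC => // k; split; rewrite ?hu ?addr_ge0 ?exprn_ge0 //; exact: cs2C.
have CS2 : P * Q * (\sum_k u k) ^+ 2 <= (\sum_k d0 k) * (\sum_k d1 k).
  apply: cs_sumC; first by rewrite mulr_ge0.
  move=> k; have [a b e f] := hd k; by split.
rewrite Sex Sey in CS1; rewrite Sd0 Sd1 in CS2.
have hS : 0 <= \sum_k u k by apply: sumr_ge0 => k _.
have hO : `|2^-1 * r'| <= `|c| * \sum_k u k.
  rewrite -So; apply: le_trans (ler_norm_sum _ _ _) _.
  rewrite mulr_sumr; apply: ler_sum => k _; exact: ho.
apply: (finalC (S := \sum_k u k)) => //.
Qed.

End S.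

Theorem theorem2 (C : numClosedFieldType) (z r z' r' : C)
  (hz : z \is Num.real) (hr : r \is Num.real)
  (hz' : z' \is Num.real) (hr' : r' \is Num.real)
  (hrho : z ^+ 2 + r ^+ 2 <= 1) (hrho' : z' ^+ 2 + r' ^+ 2 <= 1) :
  ((exists (n : nat) (K : 'I_n -> 'M[C]_2),
       IO_kraus K /\ apply_kraus K (qubit_state z r) = qubit_state z' r')
    <-> ((1 - z ^+ 2) * r' ^+ 2 <= (1 - z' ^+ 2) * r ^+ 2 /\ `|r'| <= `|r|))
  /\
  ((exists (n : nat) (K : 'I_n -> 'M[C]_2),
       SIO_kraus K /\ apply_kraus K (qubit_state z r) = qubit_state z' r')
    <-> ((1 - z ^+ 2) * r' ^+ 2 <= (1 - z' ^+ 2) * r ^+ 2 /\ `|r'| <= `|r|)).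
Proof.
split; split.
- by move=> [n [K [hK hout]]]; exact: (necC hz hr hz' hr' hrho hK hout).
- move=> [h1 h2].
  have [n [K [hK hout]]] := suffC hz hr hz' hr' hrho hrho' h1 h2.
  by exists n, K; split => //; exact: hK.1.
- by move=> [n [K [hK hout]]]; exact: (necC hz hr hz' hr' hrho hK.1 hout).
- by move=> [h1 h2]; exact: (suffC hz hr hz' hr' hrho hrho' h1 h2).
Qed.
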